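(* Let $m\ge 3$ be an integer and let $f(x_1,x_2,x_3)=a_1P_m(x_1)+a_2P_m(x_2)+a_3P_m(x_3)$ with $a_1,a_2,a_3$ positive integers. Let $L=\mathbb{Z}\mathbf{e}_1+\mathbb{Z}\mathbf{e}_2+\mathbb{Z}\mathbf{e}_3$ be a $\mathbb{Z}$-lattice with Gram matrix $(B(\mathbf{e}_i,\mathbf{e}_j))=\mathrm{diag}(a_1c^2,a_2c^2,a_3c^2)$, and let $\mathbf{v}=-\frac{d}{c}(\mathbf{e}_1+\mathbf{e}_2+\mathbf{e}_3)\in\mathbb{Q}L$. Then $f$ is regular if and only if the $\mathbb{Z}$-coset $L+\mathbf{v}$ is tight regular.
   Context: $P_m(x)=\frac{(m-2)x^2-(m-4)x}{2}$. Define $\delta=4$ if $m$ is odd, $\delta=2$ if $m\equiv2\pmod4$, $\delta=1$ if $m\equiv0\pmod4$; $c=\delta\frac{m-2}{2}$, $d=\delta\frac{m-4}{4}$. An integer $n$ is locally represented by $f$ if $f=n$ is solvable over $\mathbb{Z}_p$ for every prime $p$ and over $\mathbb{R}$; $f$ is regular if it represents (over $\mathbb{Z}$) every nonnegative integer locally represented by $f$. For the coset: $Q$ is the quadratic map of $\mathbb{Q}L$ with $B(\mathbf{x},\mathbf{y})=\frac12(Q(\mathbf{x}+\mathbf{y})-Q(\mathbf{x})-Q(\mathbf{y}))$; an integer $n$ is represented by $L+\mathbf{v}$ if $n=Q(\mathbf{x}+\mathbf{v})$ for some $\mathbf{x}\in L$, and locally represented if for every prime $p$ there is $\mathbf{x}_p\in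 L\otimes\mathbb{Z}_p$ with $Q(\mathbf{x}_p+\mathbf{v})=n$. With $\min(L+\mathbf{v})=\min\{Q(\mathbf{x}+\mathbf{v}):\mathbf{x}\in L\}$, the coset $L+\mathbf{v}$ is tight regular if it represents every locally represented integer that is $\ge\min(L+\mathbf{v})$. *)

(* Defs.v *)
From mathcomp Require Import all_boot all_order all_algebra.
From Stdlib Require Reals.
Set Implicit Arguments. Unset Strict Implicit. Unset Printing Implicit Defensive.
Import Order.TTheory GRing.Theory Num.Theory.
Local Open Scope ring_scope.

Definition Pm (m : nat) (x : rat) : rat :=
  (((m%:R - 2) * x ^+ 2 - (m%:R - 4) * x) / 2).

Definition fm (m a1 a2 a3 : nat) (x1 x2 x3 : rat) : rat :=
  a1%:R * Pm m x1 + a2%:R * Pm m x2 + a3%:R * Pm m x3.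

Definition twofZ (m a1 a2 a3 : nat) (x1 x2 x3 : int) : int :=
  let g := fun x : int => (m%:Z - 2) * x ^+ 2 - (m%:Z - 4) * x in
  a1%:Z * g x1 + a2%:Z * g x2 + a3%:Z * g x3.

(* A p-adic integer is represented by a compatible sequence of integers
   x_k (representing x mod p^k), x_{k+1} = x_k mod p^k. *)
Definition padic_seq (p : nat) (x : nat -> int) : Prop :=
  forall k : nat, (x k.+1 == x k %[mod (p ^ k)%:Z])%Z.

(* For an integer polynomial map F, the equation F(x1,x2,x3) = n in Z_p
   means equality of all components of the inverse limit. *)
Definition padic_solvable3 (p : nat) (F : int -> int -> int -> int) (n : int)
  : Prop :=
  exists x1 x2 x3 : nat -> int,
    [/\ padic_seq p x1, padic_seq p x2, padic_seq p x3 &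
        forall k : nat, (F (x1 k) (x2 k) (x3 k) == n %[mod (p ^ k)%:Z])%Z].

Definition real_solvable_f (m a1 a2 a3 n : nat) : Prop :=
  exists r1 r2 r3 : Rdefinitions.R,
    let P := fun r : Rdefinitions.R =>
      Rdefinitions.Rdiv
        (Rdefinitions.Rminus
           (Rdefinitions.Rmult (Rdefinitions.Rminus (Raxioms.INR m) (Raxioms.INR 2))
                               (Rdefinitions.Rmult r r))
           (Rdefinitions.Rmult (Rdefinitions.Rminus (Raxioms.INR m) (Raxioms.INR 4)) r))
        (Raxioms.INR 2) in
    Rdefinitions.Rplus
      (Rdefinitions.Rplus (Rdefinitions.Rmult (Raxioms.INR a1) (P r1))
                          (Rdefinitions.Rmult (Raxioms.INR a2) (P r2)))
      (Rdefinitions.Rmult (Raxioms.INR a3) (P r3))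
    = Raxioms.INR n.

(* n locally represented by f: solvable over every Z_p and over R.
   Over Z_p, f(x) = n is written equivalently as 2 f(x) = 2 n
   (Z_p is torsion free), so that only integer coefficients occur. *)
Definition f_locally_represents (m a1 a2 a3 n : nat) : Prop :=
  real_solvable_f m a1 a2 a3 n /\
  forall p : nat, prime p ->
    padic_solvable3 p (twofZ m a1 a2 a3) (2 * n%:Z).

Definition f_represents (m a1 a2 a3 n : nat) : Prop :=
  exists x1 x2 x3 : int, fm m a1 a2 a3 x1%:~R x2%:~R x3%:~R = n%:R.

Definition f_regular (m a1 a2 a3 : nat) : Prop :=
  forall n : nat, f_locally_represents m a1 a2 a3 n -> f_represents m a1 a2 a3 n.

Definition delta (m : nat) : int :=
  if odd m then 4 else if (m %% 4 == 2)%N then 2 else 1.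

(* c = delta (m-2)/2 and d = delta (m-4)/4; the divisions are exact *)
Definition cc (m : nat) : int := ((delta m * (m%:Z - 2)) %/ 2)%Z.
Definition dd (m : nat) : int := ((delta m * (m%:Z - 4)) %/ 4)%Z.

(* L = Z e1 + Z e2 + Z e3 with Gram matrix diag(a1 c^2, a2 c^2, a3 c^2);
   Q on QL in coordinates: Q(y) = sum a_i c^2 y_i^2. *)
Definition QL (m a1 a2 a3 : nat) (y1 y2 y3 : rat) : rat :=
  let c : rat := (cc m)%:~R in
  a1%:R * c ^+ 2 * y1 ^+ 2 + a2%:R * c ^+ 2 * y2 ^+ 2 + a3%:R * c ^+ 2 * y3 ^+ 2.

Definition vcoord (m : nat) : rat := - ((dd m)%:~R / (cc m)%:~R).

Definition Qcoset (m a1 a2 a3 : nat) (x1 x2 x3 : int) : rat :=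
  QL m a1 a2 a3 (x1%:~R + vcoord m) (x2%:~R + vcoord m) (x3%:~R + vcoord m).

Definition coset_represents (m a1 a2 a3 : nat) (n : int) : Prop :=
  exists x1 x2 x3 : int, Qcoset m a1 a2 a3 x1 x2 x3 = n%:~R.

(* Over Z_p (x in L (x) Z_p = Z_p^3): Q(x + v) = sum a_i c^2 (x_i - d/c)^2
   = sum a_i (c x_i - d)^2, a polynomial with integer coefficients. *)
Definition QcosetZ (m a1 a2 a3 : nat) (x1 x2 x3 : int) : int :=
  a1%:Z * (cc m * x1 - dd m) ^+ 2 + a2%:Z * (cc m * x2 - dd m) ^+ 2
  + a3%:Z * (cc m * x3 - dd m) ^+ 2.

Definition coset_locally_represents (m a1 a2 a3 : nat) (n : int) : Prop :=
  forall p : nat, prime p -> padic_solvable3 p (QcosetZ m a1 a2 a3) n.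

Definition coset_min (m a1 a2 a3 : nat) (mu : rat) : Prop :=
  (exists x1 x2 x3 : int, Qcoset m a1 a2 a3 x1 x2 x3 = mu) /\
  (forall x1 x2 x3 : int, mu <= Qcoset m a1 a2 a3 x1 x2 x3).

Definition coset_tight_regular (m a1 a2 a3 : nat) : Prop :=
  forall (mu : rat) (n : int), coset_min m a1 a2 a3 mu ->
    mu <= n%:~R -> coset_locally_represents m a1 a2 a3 n ->
    coset_represents m a1 a2 a3 n.

(* Main.v *)
Require Import Defs.
From Stdlib Require Import Reals Lra.
From mathcomp Require Import all_boot all_order all_algebra.

Module RealPart.
Local Open Scope R_scope.
Lemma real_sol (m a1 a2 a3 n : nat) : (3 <= m)%N -> (0 < a1)%N -> real_solvable_f m a1 a2 a3 n.
Proof.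
move=> /leP m3 /leP a1p.
have Hm : 3 <= INR m.
  have := le_INR _ _ m3; have -> : INR 3 = 3 by simpl; lra. done.
have Ha : 1 <= INR a1.
  have := le_INR _ _ a1p; have -> : INR 1 = 1 by simpl; lra. done.
have Hn : 0 <= INR n by apply: pos_INR.
have h2 : INR 2 = 2 by simpl; lra.
have h4 : INR 4 = 4 by simpl; lra.
set M := INR m - 2. set N := INR m - 4.
set Dl := N * N + 8 * M * INR n / INR a1.
have HD : 0 <= Dl.
  rewrite /Dl; have : 0 <= 8 * M * INR n / INR a1.
    apply: Rmult_le_pos; last by apply: Rlt_le; apply: Rinv_0_lt_compat; lra.
    rewrite /M; nra.
  nra.
set s := sqrt Dl.
have Hs : s * s = Dl by apply: sqrt_sqrt.
set r := (N + s) / (2 * M).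
exists r, 0, 0.
rewrite h2 h4 -/M -/N.
have E : M * (r * r) - N * r = (s * s - N * N) / (4 * M).
  rewrite /r; field; rewrite /M; lra.
cbv zeta; cbv beta; rewrite E Hs /Dl; field; rewrite /M; lra.
Qed.
End RealPart.
From mathcomp Require Import zify ring lra.
Import Order.TTheory GRing.Theory Num.Theory.
Local Open Scope ring_scope.
Lemma cd_spec m : (2 * cc m = delta m * (m%:Z - 2) /\ 4 * dd m = delta m * (m%:Z - 4))%Z
  /\ (0 < delta m)%Z /\ ((3 <= m)%N -> 0 < cc m)%Z.
Proof.
rewrite /cc /dd /delta; have := modn2 m.
case: (odd m) => /= H2.
  lia.
case: eqP => H4; lia.
Qed.

Definition Cm m : int := delta m * cc m.
Definition Dm m a1 a2 a3 : int := dd m ^+ 2 * (a1%:Z + a2%:Z + a3%:Z).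

Lemma key m a1 a2 a3 x1 x2 x3 :
  2 * QcosetZ m a1 a2 a3 x1 x2 x3 = Cm m * twofZ m a1 a2 a3 x1 x2 x3 + 2 * Dm m a1 a2 a3.
Proof.
have [[H2 H4] _] := cd_spec m.
rewrite /QcosetZ /twofZ /Cm /Dm.
rewrite /=.
set A := delta m * (m%:Z - 2); set B := delta m * (m%:Z - 4).
have -> : delta m * cc m *
  (a1%:Z * ((m%:Z - 2) * x1 ^+ 2 - (m%:Z - 4) * x1) + a2%:Z * ((m%:Z - 2) * x2 ^+ 2 - (m%:Z - 4) * x2) +
   a3%:Z * ((m%:Z - 2) * x3 ^+ 2 - (m%:Z - 4) * x3)) =
  a1%:Z * (cc m * x1^+2 * A - cc m * x1 * B) + a2%:Z * (cc m * x2^+2 * A - cc m * x2 * B)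
  + a3%:Z * (cc m * x3^+2 * A - cc m * x3 * B) by rewrite /A /B; ring.
rewrite /A /B -H2 -H4; ring.
Qed.

Lemma tw_prop m a1 a2 a3 x1 x2 x3 : (3 <= m)%N ->
  exists2 h, twofZ m a1 a2 a3 x1 x2 x3 = 2 * h & 0 <= h.
Proof.
move=> m3.
have G : forall x : int, exists2 h, (m%:Z - 2) * x ^+ 2 - (m%:Z - 4) * x = 2 * h & 0 <= h.
  move=> x.
  have [q Hq] : exists q, x * (x - 1) = 2 * q.
    have := divz_eq x 2; have : (x %% 2 = 0 \/ x %% 2 = 1)%Z by lia.
    set y := (x %/ 2)%Z; case=> -> Hx; rewrite Hx.
      by exists (y * (2 * y - 1)); ring.
    by exists (y * (2 * y + 1)); ring.
  exists ((m%:Z - 2) * q + x).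
    have -> : (m%:Z - 2) * x ^+ 2 - (m%:Z - 4) * x = (m%:Z - 2) * (x * (x - 1)) + 2 * x by ring.
    rewrite Hq; ring.
  have : 0 <= x * (x - 1).
    have [hx|hx] : x <= 0 \/ 1 <= x by lia.
      by apply: mulr_le0; lia.
    by apply: mulr_ge0; lia.
  rewrite Hq; nia.
have [h1 E1 P1] := G x1; have [h2 E2 P2] := G x2; have [h3 E3 P3] := G x3.
exists (a1%:Z * h1 + a2%:Z * h2 + a3%:Z * h3).
  by rewrite /twofZ /= E1 E2 E3; ring.
nia.
Qed.

Lemma Qcoset_eq m a1 a2 a3 x1 x2 x3 : (3 <= m)%N ->
  Qcoset m a1 a2 a3 x1 x2 x3 = (QcosetZ m a1 a2 a3 x1 x2 x3)%:~R.
Proof.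
move=> m3; have [_ [_ /(_ m3) cpos]] := cd_spec m.
have c0 : (cc m)%:~R != 0 :> rat by rewrite intr_eq0; lia.
have E : forall x : int, (cc m)%:~R^+2 * (x%:~R + vcoord m)^+2 = ((cc m * x - dd m)^+2)%:~R :> rat.
  move=> x; rewrite /vcoord rmorphXn rmorphB rmorphM /=; field; exact: c0.
have E' : forall (a : nat) (x : int), a%:R * (cc m)%:~R^+2 * (x%:~R + vcoord m)^+2 = (a%:Z * (cc m * x - dd m)^+2)%:~R :> rat.
  by move=> a x; rewrite -mulrA E [RHS]intrM.
rewrite /Qcoset /QL /QcosetZ /= !E' !rmorphD //.
Qed.

Lemma fm_eq m a1 a2 a3 x1 x2 x3 :
  2 * fm m a1 a2 a3 x1%:~R x2%:~R x3%:~R = (twofZ m a1 a2 a3 x1 x2 x3)%:~R :> rat.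
Proof.
rewrite /fm /Pm /twofZ /= !(rmorphD, rmorphB, rmorphN, rmorphM, rmorphXn) /= !rmorph1.
by field.
Qed.

Lemma shift_seq p x e : padic_seq p x -> padic_seq p (fun j => x (j + e)%N).
Proof.
move=> H j /=; rewrite addSn; have := H (j + e)%N; rewrite !eqz_mod_dvd.
apply: dvdz_trans; by rewrite dvdzE /= dvdn_exp2l // leq_addr.
Qed.

Lemma cancel_dvd p (C : int) : prime p -> C != 0 ->
  exists e, forall j t, ((p ^ (j + e))%:Z %| C * t)%Z -> ((p ^ j)%:Z %| t)%Z.
Proof.
move=> pp C0; have Cp : (0 < `|C|)%N by rewrite absz_gt0.
have [u cu Eu] := pfactor_coprime pp Cp.
set e := logn p `|C| in Eu *.
exists e => j t; rewrite !dvdzE /= abszM Eu expnD mulnAC dvdn_pmul2r ?expn_gt0 ?prime_gt0 //.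
by rewrite Gauss_dvdr // coprimeXl // coprime_sym.
Qed.

Lemma glue (C N : int) : C != 0 ->
  (forall p, prime p -> ((p ^ logn p `|C|)%:Z %| N)%Z) -> (C %| N)%Z.
Proof.
move=> C0 H; rewrite dvdzE; apply/dvdn_partP; first by rewrite absz_gt0.
move=> p; rewrite mem_primes => /andP[pp _]; rewrite p_part.
by have := H p pp; rewrite dvdzE.
Qed.

Lemma Cpos m : (3 <= m)%N -> 0 < Cm m.
Proof. move=> m3; have [_ [d0 /(_ m3) c0]] := cd_spec m; rewrite /Cm; nia. Qed.

Lemma Qh m a1 a2 a3 x1 x2 x3 : (3 <= m)%N ->
  exists2 h, twofZ m a1 a2 a3 x1 x2 x3 = 2 * h /\
     QcosetZ m a1 a2 a3 x1 x2 x3 = Cm m * h + Dm m a1 a2 a3 & 0 <= h.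
Proof.
move=> m3; have [h E P] := tw_prop m a1 a2 a3 x1 x2 x3 m3.
exists h => //; split => //.
have := key m a1 a2 a3 x1 x2 x3; rewrite E.
set Q := QcosetZ _ _ _ _ _ _ _; set C := Cm m; set D := Dm _ _ _ _.
nia.
Qed.

Lemma min_D m a1 a2 a3 : (3 <= m)%N -> coset_min m a1 a2 a3 (Dm m a1 a2 a3)%:~R.
Proof.
move=> m3; split.
  exists 0, 0, 0; rewrite Qcoset_eq // /QcosetZ /Dm; congr (_%:~R); ring.
move=> x1 x2 x3; rewrite Qcoset_eq // ler_int.
have [h [_ ->] P] := Qh m a1 a2 a3 x1 x2 x3 m3.
have := Cpos m m3; nia.
Qed.

Lemma min_eq m a1 a2 a3 mu : (3 <= m)%N -> coset_min m a1 a2 a3 mu ->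
  mu = (Dm m a1 a2 a3)%:~R.
Proof.
move=> m3 [[x1 [x2 [x3 E]]] H]; have [_ H2] := min_D m a1 a2 a3 m3.
apply/le_anti; rewrite -E H2 andbT.
have := H 0 0 0; rewrite E.
by rewrite Qcoset_eq // /QcosetZ /Dm; congr (_ <= _%:~R); ring.
Qed.

Lemma int2rat (z : int) (k : nat) : z%:~R = 2 * k%:R :> rat -> z = 2 * k%:Z.
Proof. move=> H; apply: (@intr_inj rat); rewrite H rmorphM /=; by []. Qed.

Theorem proposition3p1 (m a1 a2 a3 : nat) :
  (3 <= m)%N -> (0 < a1)%N -> (0 < a2)%N -> (0 < a3)%N ->
  f_regular m a1 a2 a3 <-> coset_tight_regular m a1 a2 a3.
Proof.
move=> m3 a1p a2p a3p.
have Cp := Cpos m m3.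
have C0 : Cm m != 0 by rewrite gt_eqF.
split.
- move=> Hf mu n Hmu Hle Hloc.
  have Emu := min_eq m a1 a2 a3 mu m3 Hmu.
  rewrite Emu ler_int in Hle.
  have Hdiv : (Cm m %| n - Dm m a1 a2 a3)%Z.
    apply: glue C0 _ => p pp.
    have [x1 [x2 [x3 [_ _ _ Hk]]]] := Hloc p pp.
    have := Hk (logn p `|Cm m|); rewrite eqz_mod_dvd.
    have [h [_ ->] _] := Qh m a1 a2 a3 (x1 (logn p `|Cm m|)) (x2 (logn p `|Cm m|)) (x3 (logn p `|Cm m|)) m3.
    move=> H.
    have HC : ((p ^ logn p `|Cm m|)%:Z %| Cm m * h)%Z.
      by apply: dvdz_mulr; rewrite dvdzE /= pfactor_dvdnn.
    have -> : n - Dm m a1 a2 a3 = Cm m * h - (Cm m * h + Dm m a1 a2 a3 - n) by ring.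
    by rewrite rpredB.
  have [k Ek] := dvdzP Hdiv.
  have k0 : 0 <= k by nia.
  pose kn := `|k|%N.
  have Ekn : k = kn%:Z by rewrite /kn abszE ger0_norm.
  have [y1 [y2 [y3 Hy]]] : f_represents m a1 a2 a3 kn.
    apply: Hf; split; first exact: RealPart.real_sol.
    move=> p pp; have [x1 [x2 [x3 [s1 s2 s3 Hk]]]] := Hloc p pp.
    have [e He] := cancel_dvd p (Cm m) pp C0.
    exists (fun j => x1 (j + e)%N), (fun j => x2 (j + e)%N), (fun j => x3 (j + e)%N).
    split; try exact: shift_seq.
    move=> j; rewrite eqz_mod_dvd; apply: He.
    have := Hk (j + e)%N; rewrite eqz_mod_dvd => H.
    have E2 := key m a1 a2 a3 (x1 (j + e)%N) (x2 (j + e)%N) (x3 (j + e)%N).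
    have -> : Cm m * (twofZ m a1 a2 a3 (x1 (j + e)%N) (x2 (j + e)%N) (x3 (j + e)%N) - 2 * kn%:Z)
       = 2 * (QcosetZ m a1 a2 a3 (x1 (j + e)%N) (x2 (j + e)%N) (x3 (j + e)%N) - n).
      rewrite -Ekn; nia.
    by apply: dvdz_mull.
  exists y1, y2, y3; rewrite Qcoset_eq //; congr (_%:~R).
  have Htw := int2rat _ _ (etrans (esym (fm_eq m a1 a2 a3 y1 y2 y3)) (congr1 (fun q => 2 * q) Hy)).
  have := key m a1 a2 a3 y1 y2 y3; rewrite Htw -Ekn; nia.
- move=> Ht kn [Hr Hp].
  pose n := Cm m * kn%:Z + Dm m a1 a2 a3.
  have [y1 [y2 [y3 Hy]]] : coset_represents m a1 a2 a3 n.
    apply: (Ht (Dm m a1 a2 a3)%:~R); first exact: min_D.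
      rewrite ler_int /n; nia.
    move=> p pp; have [x1 [x2 [x3 [s1 s2 s3 Hk]]]] := Hp p pp.
    have [e He] := cancel_dvd p 2 pp isT.
    exists (fun j => x1 (j + e)%N), (fun j => x2 (j + e)%N), (fun j => x3 (j + e)%N).
    split; try exact: shift_seq.
    move=> j; rewrite eqz_mod_dvd; apply: He.
    have := Hk (j + e)%N; rewrite eqz_mod_dvd => H.
    have E2 := key m a1 a2 a3 (x1 (j + e)%N) (x2 (j + e)%N) (x3 (j + e)%N).
    have -> : 2 * (QcosetZ m a1 a2 a3 (x1 (j + e)%N) (x2 (j + e)%N) (x3 (j + e)%N) - n)
       = Cm m * (twofZ m a1 a2 a3 (x1 (j + e)%N) (x2 (j + e)%N) (x3 (j + e)%N) - 2 * kn%:Z).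
      rewrite /n; nia.
    by apply: dvdz_mull.
  exists y1, y2, y3.
  rewrite Qcoset_eq // in Hy.
  have HQ : QcosetZ m a1 a2 a3 y1 y2 y3 = n by apply: (@intr_inj rat).
  have Htw : twofZ m a1 a2 a3 y1 y2 y3 = 2 * kn%:Z.
    apply: (mulfI C0); have := key m a1 a2 a3 y1 y2 y3; rewrite HQ /n; nia.
  apply: (@mulfI _ (2 : rat)) => //.
  by rewrite fm_eq Htw rmorphM.
Qed.
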